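(* Let $A$ be an annihilator locally $C^{\ast}$-algebra and $I$ a closed two-sided ideal of $A$. Then $I$ and $A/I$ are annihilator locally $C^{\ast}$-algebras, and $A$ is topologically ${}^{\ast}$-isomorphic to the Cartesian product $I\times A/I$.
   Context: Locally $C^{\ast}$-algebra: complete Hausdorff locally convex ${}^{\ast}$-algebra over $\mathbb{C}$ with jointly continuous multiplication, topology given by $C^{\ast}$-seminorms. Annihilator algebra: for every closed left ideal $J$ and closed right ideal $K$, $\mathrm{ran}(J)=0\iff J=A$ and $\mathrm{lan}(K)=0\iff K=A$, where $\mathrm{lan}(S)=\{a:aS=0\}$, $\mathrm{ran}(S)=\{a:Sa=0\}$. *)

(* Defs.v *)
From HB Require Import structures.
From mathcomp Require Import all_boot all_order all_algebra.
From mathcomp Require Import complex.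
From Stdlib Require Lists.List.
From mathcomp Require Import boolp classical_sets reals filter.
Set Implicit Arguments. Unset Strict Implicit. Unset Printing Implicit Defensive.
Import Order.TTheory GRing.Theory Num.Theory.
Local Open Scope ring_scope.
Local Open Scope classical_set_scope.

Notation cnorm := (@Normc.normc _).

(* Raw data of a (possibly non-unital) complex *-algebra equipped with a family
   of seminorms (indexed by lc_idx) defining its locally convex topology. *)
Record lcdata (R : realType) := LCData {
  lc_car : Type;
  lc_idx : Type;
  lc_zero : lc_car;
  lc_add : lc_car -> lc_car -> lc_car;
  lc_opp : lc_car -> lc_car;
  lc_scale : R[i] -> lc_car -> lc_car;
  lc_mul : lc_car -> lc_car -> lc_car;
  lc_star : lc_car -> lc_car;
  lc_sn : lc_idx -> lc_car -> R }.
Arguments LCData {R}.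
Arguments lc_sn {R} l i _.

Section LC.
Variable R : realType.
Variable A : lcdata R.
Local Notation T := (lc_car A).
Local Notation "0A" := (lc_zero A).
Local Notation "x .+ y" := (lc_add x y) (at level 50, left associativity).
Local Notation ".- x" := (lc_opp x) (at level 35).
Local Notation "a .* x" := (lc_scale a x) (at level 40).
Local Notation "x .x y" := (lc_mul x y) (at level 40, left associativity).
Local Notation p := (lc_sn A).
Local Notation lsub x y := (lc_add x (lc_opp y)).

Definition is_star_algebra : Prop :=
  (forall x y z : T, x .+ (y .+ z) = (x .+ y) .+ z) /\
  (forall x y : T, x .+ y = y .+ x) /\
  (forall x : T, 0A .+ x = x) /\
  (forall x : T, (.- x) .+ x = 0A) /\
  (forall (a : R[i]) (x y : T), a .* (x .+ y) = a .* x .+ a .* y) /\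
  (forall (a b : R[i]) (x : T), (a + b) .* x = a .* x .+ b .* x) /\
  (forall (a b : R[i]) (x : T), (a * b) .* x = a .* (b .* x)) /\
  (forall x : T, 1 .* x = x) /\
  (forall x y z : T, x .x (y .x z) = (x .x y) .x z) /\
  (forall x y z : T, x .x (y .+ z) = x .x y .+ x .x z) /\
  (forall x y z : T, (x .+ y) .x z = x .x z .+ y .x z) /\
  (forall (a : R[i]) (x y : T), a .* (x .x y) = (a .* x) .x y) /\
  (forall (a : R[i]) (x y : T), a .* (x .x y) = x .x (a .* y)) /\
  (forall x y : T, lc_star (x .+ y) = lc_star x .+ lc_star y) /\
  (forall (a : R[i]) (x : T), lc_star (a .* x) = (conjc a) .* lc_star x) /\
  (forall x y : T, lc_star (x .x y) = lc_star y .x lc_star x) /\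
  (forall x : T, lc_star (lc_star x) = x).

Definition is_Cstar_seminorm (q : T -> R) : Prop :=
  [/\ (forall x y, q (x .+ y) <= q x + q y),
      (forall a x, q (a .* x) = cnorm a * q x),
      (forall x y, q (x .x y) <= q x * q y) &
      (forall x, q (lc_star x .x x) = q x ^+ 2)].

Definition lc_ball (x : T) (F : seq (lc_idx A)) (e : R) : set T :=
  [set y | forall i, Stdlib.Lists.List.In i F -> p i (lsub y x) < e].

Definition lc_open (U : set T) : Prop :=
  forall x, U x -> exists (F : seq (lc_idx A)) (e : R), 0 < e /\ lc_ball x F e `<=` U.

Definition lc_closed (S : set T) : Prop := lc_open (~` S).

Definition lc_hausdorff : Prop := forall x : T, (forall i, p i x = 0%R) -> x = 0A.

Definition lc_complete : Prop :=
  forall F : set_system T, ProperFilter F ->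
    (forall i (e : R), 0 < e -> exists B, F B /\
        forall x y, B x -> B y -> p i (lsub x y) < e) ->
    exists x, forall i (e : R), 0 < e -> F [set y | p i (lsub y x) < e].

Definition locally_Cstar : Prop :=
  [/\ is_star_algebra, (forall i, is_Cstar_seminorm (p i)), lc_hausdorff & lc_complete].

Definition is_subspace (J : set T) : Prop :=
  [/\ J 0A, (forall x y, J x -> J y -> J (x .+ y)) & (forall a x, J x -> J (a .* x))].
Definition closed_left_ideal (J : set T) : Prop :=
  [/\ is_subspace J, (forall a x, J x -> J (a .x x)) & lc_closed J].
Definition closed_right_ideal (J : set T) : Prop :=
  [/\ is_subspace J, (forall a x, J x -> J (x .x a)) & lc_closed J].
Definition closed_ideal (J : set T) : Prop :=
  [/\ is_subspace J, (forall a x, J x -> J (a .x x)),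
      (forall a x, J x -> J (x .x a)) & lc_closed J].

Definition lan (S : set T) : set T := [set a | forall s, S s -> a .x s = 0A].
Definition ran (S : set T) : set T := [set a | forall s, S s -> s .x a = 0A].

Definition annihilator : Prop :=
  (forall J, closed_left_ideal J -> (ran J = [set 0A] <-> J = setT)) /\
  (forall K, closed_right_ideal K -> (lan K = [set 0A] <-> K = setT)).

End LC.

Definition annihilator_locally_Cstar (R : realType) (A : lcdata R) : Prop :=
  locally_Cstar A /\ annihilator A.

Definition lc_continuous (R : realType) (A B : lcdata R)
  (f : lc_car A -> lc_car B) : Prop :=
  forall U, lc_open U -> lc_open (f @^-1` U).

Definition top_star_iso (R : realType) (A B : lcdata R)
  (f : lc_car A -> lc_car B) : Prop :=
  (exists g : lc_car B -> lc_car A,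
        [/\ cancel f g, cancel g f & lc_continuous g]) /\
  [/\ lc_continuous f,
      (forall x y, f (lc_add x y) = lc_add (f x) (f y)),
      (forall a x, f (lc_scale a x) = lc_scale a (f x)),
      (forall x y, f (lc_mul x y) = lc_mul (f x) (f y)) &
      (forall x, f (lc_star x) = lc_star (f x))].

(* The star of an element of I is (provably) in I; the fallback
   branch is never used for a closed two-sided ideal of a locally C*-algebra. *)
Section Sub.
Variables (R : realType) (A : lcdata R) (I : set (lc_car A)).
Hypothesis HI : closed_ideal I.
Local Notation S := {x : lc_car A | I x}.

Let HI0 : I (lc_zero A). Proof. by case: HI => -[]. Qed.
Let HIadd x y : I x -> I y -> I (lc_add x y). Proof. by case: HI => -[_ H _] _ _ _; apply: H. Qed.
Let HIscale a x : I x -> I (lc_scale a x). Proof. by case: HI => -[_ _ H] _ _ _; apply: H. Qed.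
Let HImul x y : I x -> I (lc_mul x y). Proof. by case: HI => _ _ H _; apply: H. Qed.

Definition sub_opp (x : S) : S :=
  match pselect (I (lc_opp (sval x))) with
  | left h => exist _ _ h | right _ => x end.
Definition sub_star (x : S) : S :=
  match pselect (I (lc_star (sval x))) with
  | left h => exist _ _ h | right _ => x end.

Definition sub_lc : lcdata R :=
  LCData S (lc_idx A)
    (exist _ (lc_zero A) HI0)
    (fun x y => exist _ _ (HIadd (svalP x) (svalP y)))
    sub_opp
    (fun a x => exist _ _ (HIscale a (svalP x)))
    (fun x y => exist _ _ (HImul (sval y) (svalP x)))
    sub_star
    (fun i x => lc_sn A i (sval x)).
End Sub.

(* The quotient A/I: carrier = cosets x + I, operations through
   representatives, quotient seminorms q_i(x + I) = inf_{y in x + I} p_i(y). *)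
Section Quot.
Variables (R : realType) (A : lcdata R) (I : set (lc_car A)).
Local Notation T := (lc_car A).

Definition coset (x : T) : set T := [set y | I (lc_add y (lc_opp x))].
Definition quot_car := {C : set T | exists x, C = coset x}.
Definition qclass (x : T) : quot_car := exist _ (coset x) (ex_intro _ x erefl).
Definition qrep (C : quot_car) : T := projT1 (cid (svalP C)).

Definition quot_lc : lcdata R :=
  LCData quot_car (lc_idx A)
    (qclass (lc_zero A))
    (fun C D => qclass (lc_add (qrep C) (qrep D)))
    (fun C => qclass (lc_opp (qrep C)))
    (fun a C => qclass (lc_scale a (qrep C)))
    (fun C D => qclass (lc_mul (qrep C) (qrep D)))
    (fun C => qclass (lc_star (qrep C)))
    (fun i C => inf [set lc_sn A i y | y in sval C]).
End Quot.

Definition prod_lc (R : realType) (A B : lcdata R) : lcdata R :=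
  LCData (lc_car A * lc_car B)%type (lc_idx A + lc_idx B)%type
    (lc_zero A, lc_zero B)
    (fun x y => (lc_add x.1 y.1, lc_add x.2 y.2))
    (fun x => (lc_opp x.1, lc_opp x.2))
    (fun a x => (lc_scale a x.1, lc_scale a x.2))
    (fun x y => (lc_mul x.1 y.1, lc_mul x.2 y.2))
    (fun x => (lc_star x.1, lc_star x.2))
    (fun k x => match k with inl i => lc_sn A i x.1 | inr j => lc_sn B j x.2 end).

(* Main.v *)
Require Import Defs.
From HB Require Import structures.
From mathcomp Require Import all_boot all_order all_algebra.
From mathcomp Require Import complex.
From mathcomp Require Import boolp classical_sets reals filter.
From mathcomp Require Import lra.
Set Implicit Arguments. Unset Strict Implicit. Unset Printing Implicit Defensive.
Import Order.TTheory GRing.Theory Num.Theory.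
Local Open Scope ring_scope.
Local Open Scope classical_set_scope.
Section Transfer.
Variables (R : realType) (B C : lcdata R).
Variables (phi : lc_car B -> lc_car C) (psi : lc_car C -> lc_car B).
Variables (kap : lc_idx C -> lc_idx B) (kap' : lc_idx B -> lc_idx C).
Hypotheses (phipsi : cancel psi phi) (psiphi : cancel phi psi).
Hypothesis phi0 : phi (lc_zero B) = lc_zero C.
Hypothesis phiD : forall x y, phi (lc_add x y) = lc_add (phi x) (phi y).
Hypothesis phiN : forall x, phi (lc_opp x) = lc_opp (phi x).
Hypothesis phiZ : forall a x, phi (lc_scale a x) = lc_scale a (phi x).
Hypothesis phiM : forall x y, phi (lc_mul x y) = lc_mul (phi x) (phi y).
Hypothesis phiS : forall x, phi (lc_star x) = lc_star (phi x).
Hypothesis phip : forall i x, lc_sn C i (phi x) = lc_sn B (kap i) x.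
Hypothesis phip' : forall j x, lc_sn B j x = lc_sn C (kap' j) (phi x).
Local Notation In := Stdlib.Lists.List.In.

Lemma psi_inj c d : psi c = psi d -> c = d.
Proof. by move=> h; rewrite -(phipsi c) h phipsi. Qed.
Lemma phi_inj x y : phi x = phi y -> x = y.
Proof. by move=> h; rewrite -(psiphi x) h psiphi. Qed.
Lemma psi0 : psi (lc_zero C) = lc_zero B. Proof. by rewrite -phi0 psiphi. Qed.
Lemma psiD c d : psi (lc_add c d) = lc_add (psi c) (psi d).
Proof. by rewrite -{1}(phipsi c) -{1}(phipsi d) -phiD psiphi. Qed.
Lemma psiN c : psi (lc_opp c) = lc_opp (psi c).
Proof. by rewrite -{1}(phipsi c) -phiN psiphi. Qed.
Lemma psiZ a c : psi (lc_scale a c) = lc_scale a (psi c).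
Proof. by rewrite -{1}(phipsi c) -phiZ psiphi. Qed.
Lemma psiM c d : psi (lc_mul c d) = lc_mul (psi c) (psi d).
Proof. by rewrite -{1}(phipsi c) -{1}(phipsi d) -phiM psiphi. Qed.
Lemma psiS c : psi (lc_star c) = lc_star (psi c).
Proof. by rewrite -{1}(phipsi c) -phiS psiphi. Qed.
Lemma pCB i c : lc_sn C i c = lc_sn B (kap i) (psi c).
Proof. by rewrite -phip phipsi. Qed.

Lemma tr_alg : is_star_algebra B -> is_star_algebra C.
Proof.
case=> h1 [h2 [h3 [h4 [h5 [h6 [h7 [h8 [h9 [h10 [h11 [h12 [h13 [h14 [h15 [h16 h17]]]]]]]]]]]]]]].
repeat split.
all: move=> *; apply: psi_inj; rewrite ?(psiD, psiN, psiZ, psiM, psiS, psi0).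
all: first [exact: h1 | exact: h2 | exact: h3 | exact: h4 | exact: h5 | exact: h6
  | exact: h7 | exact: h8 | exact: h9 | exact: h10 | exact: h11 | exact: h12
  | exact: h13 | exact: h14 | exact: h15 | exact: h16 | exact: h17].
Qed.

Lemma tr_sn : (forall j, is_Cstar_seminorm (lc_sn B j)) ->
  forall i, is_Cstar_seminorm (lc_sn C i).
Proof.
move=> h i; case: (h (kap i)) => q1 q2 q3 q4.
split => *; rewrite !pCB ?(psiD, psiZ, psiM, psiS).
- exact: q1.
- exact: q2.
- exact: q3.
- exact: q4.
Qed.

Lemma tr_haus : lc_hausdorff B -> lc_hausdorff C.
Proof.
move=> hB c h; apply: psi_inj; rewrite psi0; apply: hB => j.
by rewrite phip' phipsi; apply: h.
Qed.

Lemma tr_complete : lc_complete B -> lc_complete C.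
Proof.
move=> hB F FF cF.
have GF : ProperFilter (psi @ F) by exact: fmap_proper_filter.
have [b0 hb0] : exists b0, forall j e, 0 < e ->
    (psi @ F) [set y | lc_sn B j (lc_add y (lc_opp b0)) < e].
  apply: hB => j e e0; have [S [FS hS]] := cF (kap' j) e e0.
  exists (psi @` S); split.
    by change (F (psi @^-1` (psi @` S))); apply: filterS FS => u Su; exists u.
  move=> _ _ [u Su <-] [v Sv <-]; have := hS u v Su Sv.
  by rewrite -psiN -psiD phip' phipsi.
exists (phi b0) => i e e0.
have h : F (psi @^-1` [set y | lc_sn B (kap i) (lc_add y (lc_opp b0)) < e]) := hb0 _ e e0.
apply: filterS h => u /=.
by rewrite pCB psiD psiN psiphi.
Qed.

Lemma tr_closed (L : set (lc_car C)) : lc_closed L -> lc_closed [set x | L (phi x)].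
Proof.
move=> cL x /= nL; have [F [e [e0 sub]]] := cL (phi x) nL.
exists (List.map kap F), e; split => // y hy /= Ly; apply: (sub (phi y)) Ly => i iF.
by rewrite -phiN -phiD phip; apply: hy; apply: List.in_map.
Qed.

Lemma tr_sub (L : set (lc_car C)) : is_subspace L -> is_subspace [set x | L (phi x)].
Proof.
case=> L0 LD LZ; split => /=.
- by rewrite phi0.
- by move=> x y hx hy; rewrite phiD; apply: LD.
- by move=> a x hx; rewrite phiZ; apply: LZ.
Qed.

Lemma tr_ran (L : set (lc_car C)) x : ran [set x | L (phi x)] x <-> ran L (phi x).
Proof.
split=> h.
  by move=> t Lt; rewrite -(phipsi t) -phiM h /= ?phipsi // phi0.
by move=> s Ls; apply: phi_inj; rewrite phiM phi0; apply: h.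
Qed.
Lemma tr_lan (L : set (lc_car C)) x : lan [set x | L (phi x)] x <-> lan L (phi x).
Proof.
split=> h.
  by move=> t Lt; rewrite -(phipsi t) -phiM h /= ?phipsi // phi0.
by move=> s Ls; apply: phi_inj; rewrite phiM phi0; apply: h.
Qed.

Lemma tr_eq0 (S : set (lc_car B)) (S' : set (lc_car C)) :
  (forall x, S x <-> S' (phi x)) -> (S = [set lc_zero B] <-> S' = [set lc_zero C]).
Proof.
move=> hS; split => e; apply/seteqP; split.
- move=> c /= Sc; have : S (psi c) by apply/hS; rewrite phipsi.
  by rewrite e /= => h; rewrite -(phipsi c) h phi0.
- by move=> c /= ->; rewrite -phi0; apply/hS; rewrite e.
- by move=> x /= /hS; rewrite e /= -phi0 => /phi_inj.
- by move=> x /= ->; apply/hS; rewrite e /= phi0.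
Qed.

Lemma tr_T (L : set (lc_car C)) : [set x | L (phi x)] = setT <-> L = setT.
Proof.
split => e; apply/seteqP; split => // c _.
  by rewrite -(phipsi c); have : [set x | L (phi x)] (psi c) by rewrite e.
by rewrite e.
Qed.

Lemma tr_ann : annihilator B -> annihilator C.
Proof.
move=> [hl hr]; split.
- move=> L [sL mL cL].
  have cL' : closed_left_ideal [set x | L (phi x)].
    split; [exact: tr_sub|idtac|exact: tr_closed].
    by move=> a x /= hx; rewrite phiM; apply: mL.
  rewrite -tr_T -(hl _ cL'); apply: iff_sym; apply: tr_eq0 => x; exact: tr_ran.
- move=> L [sL mL cL].
  have cL' : closed_right_ideal [set x | L (phi x)].
    split; [exact: tr_sub|idtac|exact: tr_closed].
    by move=> a x /= hx; rewrite phiM; apply: mL.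
  rewrite -tr_T -(hr _ cL'); apply: iff_sym; apply: tr_eq0 => x; exact: tr_lan.
Qed.

Lemma tr_ok : annihilator_locally_Cstar B -> annihilator_locally_Cstar C.
Proof.
case=> [[h1 h2 h3 h4] h5]; split; last exact: tr_ann.
split; [exact: tr_alg|exact: tr_sn|exact: tr_haus|exact: tr_complete].
Qed.
End Transfer.


Section Cont.
Variables (R : realType) (B C : lcdata R) (f : lc_car B -> lc_car C).
Local Notation In := Stdlib.Lists.List.In.
Lemma cont_by : (forall i, exists L : seq (lc_idx B), forall x y (e : R), 0 < e ->
    (forall j, In j L -> lc_sn B j (lc_add y (lc_opp x)) < e) ->
    lc_sn C i (lc_add (f y) (lc_opp (f x))) < e + e) -> lc_continuous f.
Proof.
move=> h; have [L hL] := choice h.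
move=> U oU x Ux; have [F [e [e0 sub]]] := oU (f x) Ux.
have e2 : 0 < e / 2 by rewrite divr_gt0.
exists (List.flat_map L F), (e / 2); split => // y hy; apply: sub => i iF.
have := hL i x y (e / 2) e2 (fun j hj => hy j (proj2 (List.in_flat_map _ _ _)
  (ex_intro _ i (conj iF hj)))).
lra.
Qed.
End Cont.

Lemma pair_eq (X Y : Type) (a a' : X) (b b' : Y) : a = a' -> b = b' -> (a, b) = (a', b').
Proof. by move=> -> ->. Qed.

Section S.
Variable R : realType.
Variable A : lcdata R.
Hypothesis hs : is_star_algebra A.
Local Notation T := (lc_car A).
Local Notation "x ** y" := (lc_mul x y) (at level 40, left associativity).
Local Notation "x ^#" := (lc_star x) (at level 2).
Lemma addA : associative (@lc_add _ A). Proof. by case: hs => h _ x y z; rewrite h. Qed.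
Lemma addC : commutative (@lc_add _ A). Proof. by case: hs => _ [h _]. Qed.
Lemma add0 : left_id (lc_zero A) (@lc_add _ A). Proof. by case: hs => _ [_ [h _]]. Qed.
Lemma addN : left_inverse (lc_zero A) (@lc_opp _ A) (@lc_add _ A). Proof. by case: hs => _ [_ [_ [h _]]]. Qed.
HB.instance Definition _ := gen_eqMixin T.
HB.instance Definition _ := gen_choiceMixin T.
HB.instance Definition _ := GRing.isZmodule.Build T addA addC add0 addN.
Lemma scA (a b : R[i]) (v : T) : lc_scale a (lc_scale b v) = lc_scale (a * b) v.
Proof. by case: hs => _ [_ [_ [_ [_ [_ [h _]]]]]]; rewrite h. Qed.
Lemma sc1 (v : T) : lc_scale 1 v = v.
Proof. by case: hs => _ [_ [_ [_ [_ [_ [_ [h _]]]]]]]. Qed.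
Lemma scDr (a : R[i]) : {morph lc_scale a : x y / (x : T) + y}.
Proof. by case: hs => _ [_ [_ [_ [h _]]]] x y; apply: h. Qed.
Lemma scDl (v : T) : {morph (fun a : R[i] => lc_scale a v : T) : a b / a + b}.
Proof. by case: hs => _ [_ [_ [_ [_ [h _]]]]] a b; rewrite h. Qed.
HB.instance Definition _ := GRing.Zmodule_isLmodule.Build R[i] T scA sc1 scDr scDl.
Lemma scE (a : R[i]) (x : T) : lc_scale a x = a *: x. Proof. by []. Qed.
Lemma mulA (x y z : T) : x ** (y ** z) = x ** y ** z.
Proof. case: hs => _ [_ [_ [_ [_ [_ [_ [_ [h _]]]]]]]]; move=> *; exact: h. Qed.
Lemma mulDr (x y z : T) : x ** (y + z) = x ** y + x ** z.
Proof. case: hs => _ [_ [_ [_ [_ [_ [_ [_ [_ [h _]]]]]]]]]; move=> *; exact: h. Qed.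
Lemma mulDl (x y z : T) : (x + y) ** z = x ** z + y ** z.
Proof. case: hs => _ [_ [_ [_ [_ [_ [_ [_ [_ [_ [h _]]]]]]]]]]; move=> *; exact: h. Qed.
Lemma scmull (a : R[i]) (x y : T) : a *: (x ** y) = (a *: x) ** y.
Proof. case: hs => _ [_ [_ [_ [_ [_ [_ [_ [_ [_ [_ [h _]]]]]]]]]]]; move=> *; exact: h. Qed.
Lemma scmulr (a : R[i]) (x y : T) : a *: (x ** y) = x ** (a *: y).
Proof. case: hs => _ [_ [_ [_ [_ [_ [_ [_ [_ [_ [_ [_ [h _]]]]]]]]]]]]; move=> *; exact: h. Qed.
Lemma starD (x y : T) : (x + y)^# = x^# + y^#.
Proof. case: hs => _ [_ [_ [_ [_ [_ [_ [_ [_ [_ [_ [_ [_ [h _]]]]]]]]]]]]]; move=> *; exact: h. Qed.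
Lemma starZ (a : R[i]) (x : T) : (a *: x)^# = (conjc a) *: x^#.
Proof. case: hs => _ [_ [_ [_ [_ [_ [_ [_ [_ [_ [_ [_ [_ [_ [h _]]]]]]]]]]]]]]; move=> *; exact: h. Qed.
Lemma starM (x y : T) : (x ** y)^# = y^# ** x^#.
Proof. case: hs => _ [_ [_ [_ [_ [_ [_ [_ [_ [_ [_ [_ [_ [_ [_ [h _]]]]]]]]]]]]]]]; move=> *; exact: h. Qed.
Lemma starK (x : T) : x^#^# = x.
Proof. by case: hs => _ [_ [_ [_ [_ [_ [_ [_ [_ [_ [_ [_ [_ [_ [_ [_ h]]]]]]]]]]]]]]]. Qed.
Lemma mul0x (x : T) : 0 ** x = 0.
Proof. by apply: (@addrI _ (0 ** x)); rewrite -mulDl !addr0. Qed.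
Lemma mulx0 (x : T) : x ** 0 = 0.
Proof. by apply: (@addrI _ (x ** 0)); rewrite -mulDr !addr0. Qed.
Lemma mulNx (x y : T) : (- x) ** y = - (x ** y).
Proof. by apply/eqP; rewrite -addr_eq0 -mulDl addNr mul0x. Qed.
Lemma mulxN (x y : T) : x ** (- y) = - (x ** y).
Proof. by apply/eqP; rewrite -addr_eq0 -mulDr addNr mulx0. Qed.
Lemma mulBl (x y z : T) : (x - y) ** z = x ** z - y ** z.
Proof. by rewrite mulDl mulNx. Qed.
Lemma mulBr (x y z : T) : x ** (y - z) = x ** y - x ** z.
Proof. by rewrite mulDr mulxN. Qed.
Lemma star0 : (0 : T)^# = 0.
Proof. by apply: (@addrI _ (0^#)); rewrite -starD !addr0. Qed.
Lemma starN (x : T) : (- x)^# = - x^#.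
Proof. by apply/eqP; rewrite -addr_eq0 -starD addNr star0. Qed.
Lemma starB (x y : T) : (x - y)^# = x^# - y^#.
Proof. by rewrite starD starN. Qed.
Lemma star_inj (x y : T) : x^# = y^# -> x = y.
Proof. by move=> h; rewrite -(starK x) h starK. Qed.
Lemma star_eq0 (x : T) : x^# = 0 -> x = 0.
Proof. by move=> h; rewrite -(starK x) h star0. Qed.

Hypothesis hp : forall i, is_Cstar_seminorm (lc_sn A i).
Local Notation p := (lc_sn A).
Lemma pD i (x y : T) : p i (x + y) <= p i x + p i y. Proof. by case: (hp i) => h1 h2 h3 h4; first [apply: h1|apply: h2|apply: h3|apply: h4]. Qed.
Lemma pZ i a (x : T) : p i (a *: x) = cnorm a * p i x. Proof. by case: (hp i) => h1 h2 h3 h4; first [apply: h1|apply: h2|apply: h3|apply: h4]. Qed.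
Lemma pM i (x y : T) : p i (x ** y) <= p i x * p i y. Proof. by case: (hp i) => h1 h2 h3 h4; first [apply: h1|apply: h2|apply: h3|apply: h4]. Qed.
Lemma pC i (x : T) : p i (x^# ** x) = p i x ^+ 2. Proof. by case: (hp i) => h1 h2 h3 h4; first [apply: h1|apply: h2|apply: h3|apply: h4]. Qed.
Lemma p0 i : p i (0 : T) = 0.
Proof. by rewrite -(scale0r (0 : T)) pZ Normc.normc0 mul0r. Qed.
Lemma pN i (x : T) : p i (- x) = p i x.
Proof. by rewrite -scaleN1r pZ normcN Normc.normc1 mul1r. Qed.
Lemma p_ge0 i (x : T) : 0 <= p i x.
Proof. have := pD i x (- x); rewrite subrr p0 pN; lra. Qed.
Lemma pB i (x y : T) : p i (x - y) = p i (y - x).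
Proof. by rewrite -pN opprB. Qed.
Lemma pDB i (x y z : T) : p i (x - z) <= p i (x - y) + p i (y - z).
Proof. have -> : x - z = (x - y) + (y - z) by rewrite addrA subrK. exact: pD. Qed.
Lemma p_star_le i (x : T) : p i x <= p i x^#.
Proof.
have := pM i x^# x; rewrite pC expr2 => h.
have := p_ge0 i x; have := p_ge0 i x^#; nra.
Qed.
Lemma p_star i (x : T) : p i x^# = p i x.
Proof. by apply/eqP; rewrite eq_le p_star_le -{2}(starK x) p_star_le. Qed.
Hypothesis hH : lc_hausdorff A.
Local Notation In := Stdlib.Lists.List.In.

Lemma small0 (r : R) : 0 <= r -> (forall e, 0 < e -> r <= e) -> r = 0.
Proof.
move=> r0 h; apply/eqP; rewrite eq_le r0 andbT; apply/negP => /negP.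
rewrite -ltNge => rp; have := h (r / 2); rewrite divr_gt0 // => /(_ isT); lra.
Qed.

Lemma pzero (x : T) : (forall i, p i x = 0) -> x = 0.
Proof. exact: hH. Qed.

Lemma cstar0 (x : T) : x^# ** x = 0 -> x = 0.
Proof.
move=> h; apply: pzero => i; have := pC i x; rewrite h p0 => /esym/eqP.
by rewrite expf_eq0 /= => /eqP.
Qed.
Lemma cstar0' (x : T) : x ** x^# = 0 -> x = 0.
Proof. by move=> h; apply: star_eq0; apply: cstar0; rewrite starK. Qed.

Lemma semiprime (x : T) : (forall a, x ** a ** x = 0) -> x = 0.
Proof.
move=> h; apply: cstar0; apply: cstar0.
rewrite starM starK -mulA [x ** (x^# ** x)]mulA h.
by rewrite mulx0.
Qed.

Definition approx (S : set T) (x : T) := forall (F : seq (lc_idx A)) (e : R),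
  0 < e -> exists y, S y /\ forall i, In i F -> p i (y - x) < e.

Lemma closedP (S : set T) x : lc_closed S -> approx S x -> S x.
Proof.
move=> cS ax; apply: contrapT => nSx.
have [F [e [e0 sub]]] := cS x nSx.
have [y [Sy hy]] := ax F e e0.
exact: (sub y hy Sy).
Qed.

Lemma closedI (S : set T) : (forall x, approx S x -> S x) -> lc_closed S.
Proof.
move=> h x nSx; apply: contrapT => nex; apply: nSx; apply: h => F e e0.
apply: contrapT => ney; apply: nex; exists F, e; split => // y yb Sy.
by apply: ney; exists y; split.
Qed.

Lemma approx_p (S : set T) x i e : approx S x -> 0 < e ->
  exists y, S y /\ p i (y - x) < e.
Proof. by move=> ax e0; have [y [Sy h]] := ax [:: i] e e0; exists y; split => //; apply: h; left. Qed.

Lemma lan_closed (S : set T) : lc_closed (lan S).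
Proof.
apply: closedI => x ax s Ss; apply: pzero => i.
apply: small0; first exact: p_ge0.
move=> e e0.
have e1 : 0 < e / (p i s + 1) by rewrite divr_gt0 //; have := p_ge0 i s; lra.
have [y [ys hy]] := approx_p i ax e1.
have -> : x ** s = - ((y - x) ** s) by rewrite mulBl (ys s Ss) sub0r opprK.
rewrite pN; apply: le_trans (pM _ _ _) _.
have ps := p_ge0 i s; have pyx := p_ge0 i (y - x).
have : p i (y - x) * (p i s + 1) < e by rewrite -ltr_pdivlMr //; lra.
nra.
Qed.

Lemma ran_closed (S : set T) : lc_closed (ran S).
Proof.
apply: closedI => x ax s Ss; apply: pzero => i.
apply: small0; first exact: p_ge0.
move=> e e0.
have e1 : 0 < e / (p i s + 1) by rewrite divr_gt0 //; have := p_ge0 i s; lra.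
have [y [ys hy]] := approx_p i ax e1.
have -> : s ** x = - (s ** (y - x)) by rewrite mulBr (ys s Ss) sub0r opprK.
rewrite pN; apply: le_trans (pM _ _ _) _.
have ps := p_ge0 i s; have pyx := p_ge0 i (y - x).
have : p i (y - x) * (p i s + 1) < e by rewrite -ltr_pdivlMr //; lra.
nra.
Qed.
Section Subsp.
Variable S : set T.
Hypothesis hS : is_subspace S.
Lemma sub0 : S 0. Proof. by case: hS. Qed.
Lemma subD x y : S x -> S y -> S (x + y). Proof. by case: hS => _ h _; apply: h. Qed.
Lemma subZ a x : S x -> S (a *: x). Proof. by case: hS => _ _ h; apply: h. Qed.
Lemma subN x : S x -> S (- x). Proof. by move=> Sx; rewrite -scaleN1r; apply: subZ. Qed.
Lemma subB x y : S x -> S y -> S (x - y). Proof. by move=> Sx Sy; apply: subD => //; apply: subN. Qed.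
End Subsp.
Arguments subD {S} hS {x y}.
Arguments subZ {S} hS a {x}.
Arguments subN {S} hS {x}.
Arguments subB {S} hS {x y}.

Lemma subspaceI (S : set T) : S 0 -> (forall x y, S x -> S y -> S (x + y)) ->
  (forall a x, S x -> S (a *: x)) -> is_subspace S.
Proof. by move=> h1 h2 h3; split. Qed.

Definition sumset (I J : set T) := [set x : T | exists a b, [/\ I a, J b & x = a + b]].

Lemma sumset_sub (I J : set T) : is_subspace I -> is_subspace J -> is_subspace (sumset I J).
Proof.
move=> sI sJ; apply: subspaceI.
- by exists 0, 0; split; [exact: sub0 sI|exact: sub0 sJ|rewrite addr0].
- move=> u1 v1 [a [b [Ia Jb ->]]] [a' [b' [Ia' Jb' ->]]].
  exists (a + a'), (b + b'); split; [exact: (subD sI Ia Ia')|exact: (subD sJ Jb Jb')|by rewrite addrACA].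
- move=> c u1 [a [b [Ia Jb ->]]]; exists (c *: a), (c *: b); split;
    [exact: (subZ sI c Ia)|exact: (subZ sJ c Jb)|by rewrite scalerDr].
Qed.

Lemma idB4 (a b a' b' x : T) : (a + b - x) - (a' + b' - x) = (a - a') + (b - b').
Proof. by rewrite opprB addrA subrK opprD addrACA. Qed.
Lemma idB3 (a b x a0 : T) : (a + b - x) - (a - a0) = b - (x - a0).
Proof. rewrite !opprB [a + b]addrC -!addrA; congr (_ + _). by rewrite addrCA [a + (a0 - a)]addrCA subrr addr0 addrC. Qed.
Lemma pBle i (u v : T) : p i (u - v) <= p i u + p i v.
Proof. by rewrite -(pN i v); apply: pD. Qed.

Lemma filter_balls (G : set_system T) (FG : Filter G) (a0 : T) :
  (forall i e, 0 < e -> G [set y | p i (y - a0) < e]) ->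
  forall F e, 0 < e -> G [set y | forall i, In i F -> p i (y - a0) < e].
Proof.
move=> h; elim=> [|i F IH] e e0.
  by apply: filterS filterT => y _ i [].
apply: filterS (filterI (h i e e0) (IH e e0)) => y [h1 h2] j [<-|jF] //.
exact: h2.
Qed.

Hypothesis hC : lc_complete A.

Lemma sum_closed (I J : set T) : is_subspace I -> is_subspace J ->
  lc_closed I -> lc_closed J ->
  (forall a b i, I a -> J b -> p i a <= p i (a + b)) ->
  lc_closed (sumset I J).
Proof.
move=> sI sJ cI cJ est; apply: closedI => x ax.
pose B (k : seq (lc_idx A) * R) := [set a | I a /\ exists b, J b /\
  forall i, In i k.1 -> p i (a + b - x) < k.2].
pose G := filter_from [set k : seq (lc_idx A) * R | 0 < k.2] B.
have GF : Filter G.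
  apply: filter_from_filter; first by exists ([::], 1) => /=; lra.
  move=> k k' /= k0 k'0; exists (k.1 ++ k'.1, Num.min k.2 k'.2).
    by rewrite /= lt_min k0 k'0.
  move=> a [Ia [b [Jb hb]]]; split; split => //; exists b; split => // i hi.
    by have := hb i (List.in_or_app _ _ _ (or_introl hi)); rewrite lt_min => /andP[].
  by have := hb i (List.in_or_app _ _ _ (or_intror hi)); rewrite lt_min => /andP[].
have GP : ProperFilter G.
  apply: filter_from_proper => k k0.
  have [y [[a [b [Ia Jb ->]]] hy]] := ax k.1 k.2 k0.
  by exists a; split => //; exists b; split.
have [a0 ha0] : exists a0, forall i e, 0 < e -> G [set y | p i (y - a0) < e].
  apply: hC => i e e0; exists (B ([:: i], e / 2)); split.
    by exists ([:: i], e / 2) => //=; rewrite divr_gt0.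
  move=> a a' [Ia [b [Jb hb]]] [Ia' [b' [Jb' hb']]].
  have h1 := hb i (or_introl erefl); have h2 := hb' i (or_introl erefl).
  apply: le_lt_trans (est (a - a') (b - b') i (subB sI Ia Ia') (subB sJ Jb Jb')) _.
  rewrite -(idB4 a b a' b' x); apply: le_lt_trans (pBle _ _ _) _; rewrite /=in h1 h2; lra.
have Ia0 : I a0.
  apply: (closedP cI) => F e e0.
  have /filter_ex [y [h1 [Iy _]]] : G ([set y | forall i, In i F -> p i (y - a0) < e] `&` B ([::], 1)).
    apply: filterI; first exact: filter_balls.
    by exists ([::], 1) => //=; lra.
  by exists y.
have Jb0 : J (x - a0).
  apply: (closedP cJ) => F e e0.
  have e2 : 0 < e / 2 by rewrite divr_gt0.
  have /filter_ex [y [h1 [Iy [b [Jb hb]]]]] : G ([set y | forall i, In i F -> p i (y - a0) < e / 2] `&` B (F, e / 2)).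
    by apply: filterI; [exact: filter_balls|exists (F, e / 2)].
  exists b; split => // i iF; rewrite -(idB3 y b x a0).
  apply: le_lt_trans (pBle _ _ _) _.
  have := hb i iF; have := h1 i iF; rewrite /=; lra.
by exists a0, (x - a0); split => //; rewrite addrC subrK.
Qed.
Hypothesis hann : annihilator A.

Section Ideal.
Variable I : set T.
Hypothesis HI : closed_ideal I.
Lemma sI : is_subspace I. Proof. by case: HI. Qed.
Lemma Iml a x : I x -> I (a ** x). Proof. by case: HI => _ h _ _; apply: h. Qed.
Lemma Imr a x : I x -> I (x ** a). Proof. by case: HI => _ _ h _; apply: h. Qed.
Lemma cI : lc_closed I. Proof. by case: HI. Qed.

Local Notation J := (lan I).

Lemma lan_ran x : J x <-> ran I x.
Proof.
split=> h s Is.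
  apply: semiprime => a.
  by rewrite -!mulA [a ** (s ** x)]mulA [x ** (a ** s ** x)]mulA (h _ (Iml a Is)) mul0x mulx0.
apply: semiprime => a.
by rewrite -!mulA [a ** (x ** s)]mulA [s ** (a ** x ** s)]mulA [s ** (a ** x)]mulA (h _ (Imr a Is)) mul0x mulx0.
Qed.

Lemma sJ : is_subspace J.
Proof.
split.
- by move=> s _; rewrite mul0x.
- by move=> x y hx hy s Is; rewrite mulDl hx // hy // addr0.
- by move=> a x hx s Is; rewrite -scmull hx // scaler0.
Qed.
Lemma Jmr a x : J x -> J (x ** a).
Proof. by move=> hx s Is; rewrite -mulA hx //; apply: Iml. Qed.
Lemma Jml a x : J x -> J (a ** x).
Proof. by move=> /lan_ran hx; apply/lan_ran => s Is; rewrite mulA hx //; apply: Imr. Qed.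
Lemma cJ : lc_closed J. Proof. exact: lan_closed. Qed.
Lemma Jstar x : J x -> J x^#.
Proof.
move=> hx s Is; apply: cstar0'.
rewrite starM starK -mulA [s ** (s^# ** x)]mulA.
by have /lan_ran h := hx; rewrite h ?mulx0 //; apply: Imr.
Qed.
Lemma IJ0 x : I x -> J x -> x = 0.
Proof. by move=> Ix Jx; apply: semiprime => a; rewrite -mulA Jx //; apply: Iml. Qed.

Lemma est_gen i (a b : T) : a^# ** b = 0 -> b^# ** a = 0 ->
  (a^# ** a) ** (b^# ** b) = 0 -> p i a <= p i (a + b).
Proof.
move=> h1 h2 h3.
set h := a^# ** a; set k := b^# ** b.
have hs' : h^# = h by rewrite /h starM starK.
have e1 : (a + b)^# ** (a + b) = h + k.
  by rewrite starD mulDl !mulDr h1 h2 addr0 add0r.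
have e2 : p i h <= p i (h + k).
  have := pM i h (h + k); rewrite mulDr h3 addr0.
  have := pC i h; rewrite hs' => ->; rewrite expr2 => H.
  have := p_ge0 i h; have := p_ge0 i (h + k); nra.
have := pC i a; have := pC i (a + b); rewrite e1 -/h => q1 q2.
move: e2; rewrite q1 q2 => e2.
have := p_ge0 i a; have := p_ge0 i (a + b); nra.
Qed.

Lemma est_IJ a b i : I a -> J b -> p i a <= p i (a + b).
Proof.
move=> Ia Jb; apply: est_gen.
- by apply: star_inj; rewrite starM starK star0; apply: (Jstar Jb).
- exact: (Jstar Jb).
- have /lan_ran h := Jstar Jb.
  by rewrite -mulA [a ** (b^# ** b)]mulA h // mul0x mulx0.
Qed.
Lemma est_JI a b i : I a -> J b -> p i b <= p i (a + b).
Proof.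
move=> Ia Jb; rewrite addrC; apply: est_gen.
- exact: (Jstar Jb).
- by apply: star_inj; rewrite starM starK star0; apply: (Jstar Jb).
- have /lan_ran h := Jstar Jb.
  have h' : b ** a^# = 0 by apply: star_inj; rewrite starM starK star0; apply: h.
  by rewrite -mulA [b ** (a^# ** a)]mulA h' mul0x mulx0.
Qed.

Lemma decomp x : exists a b, [/\ I a, J b & x = a + b].
Proof.
have cK : closed_right_ideal (sumset I J).
  split.
  - exact: sumset_sub sI sJ.
  - move=> c u1 [a [b [Ia Jb ->]]]; exists (a ** c), (b ** c); split;
      [exact: Imr|exact: Jmr|by rewrite mulDl].
  - exact: sum_closed sI sJ cI cJ est_IJ.
have : lan (sumset I J) = [set 0].
  apply/seteqP; split => y /=.
    move=> hy; have Jy : J y by move=> s Is; apply: hy; exists s, 0; split => //;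
      [exact: sub0 sJ|rewrite addr0].
    apply: semiprime => a; rewrite -mulA; apply: hy; exists 0, (a ** y); split;
      [exact: sub0 sI|exact: Jml|by rewrite add0r].
  by move=> -> u _; rewrite mul0x.
move/((hann.2 _ cK).1) => e.
by have : sumset I J x by rewrite e.
Qed.

Lemma Istar x : I x -> I x^#.
Proof.
move=> Ix; have [a [b [Ia Jb e]]] := decomp x^#.
have lJ : lan J b.
  move=> j Jj; have -> : b = x^# - a by rewrite e addrC addKr.
  rewrite mulBl; have /lan_ran h := Jj.
  have -> : x^# ** j = 0.
    by apply: star_inj; rewrite starM starK star0; apply: (Jstar Jj).
  by rewrite h // subrr.
have b0 : b = 0 by apply: semiprime => c; rewrite -mulA lJ //; apply: Jml.
by rewrite e b0 addr0.
Qed.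

Definition pr1 x : T := sval (cid (decomp x)).
Definition pr2 x : T := x - pr1 x.
Lemma pr1I x : I (pr1 x).
Proof. by rewrite /pr1; case: cid => a [b [Ia Jb e]]. Qed.
Lemma pr2J x : J (pr2 x).
Proof. by rewrite /pr2 /pr1; case: cid => a [b [Ia Jb e]] /=; rewrite e addrC addKr. Qed.
Lemma pr12 x : x = pr1 x + pr2 x.
Proof. by rewrite /pr2 addrC subrK. Qed.
Lemma uniqIJ a b a' b' : I a -> J b -> I a' -> J b' -> a + b = a' + b' -> a = a'.
Proof.
move=> Ia Jb Ia' Jb' e; apply/eqP; rewrite -subr_eq0; apply/eqP.
apply: IJ0; first exact: (subB sI Ia Ia').
have -> : a - a' = b' - b.
  by rewrite -(addrK b a) e addrAC [a' + b']addrC addrK.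
exact: (subB sJ Jb' Jb).
Qed.
Lemma pr1E a b : I a -> J b -> pr1 (a + b) = a.
Proof.
move=> Ia Jb; apply: (uniqIJ (pr1I (a + b)) (pr2J (a + b)) Ia Jb).
by rewrite -pr12.
Qed.
Lemma pr1_I a : I a -> pr1 a = a.
Proof. by move=> Ia; rewrite -{1}(addr0 a) (pr1E Ia (sub0 sJ)). Qed.
Lemma pr1_J b : J b -> pr1 b = 0.
Proof. by move=> Jb; rewrite -{1}(add0r b) (pr1E (sub0 sI) Jb). Qed.
Lemma pr2E a b : I a -> J b -> pr2 (a + b) = b.
Proof. by move=> Ia Jb; rewrite /pr2 (pr1E Ia Jb) addrC addKr. Qed.
Lemma pr1D x y : pr1 (x + y) = pr1 x + pr1 y.
Proof.
rewrite {1}(pr12 x) {1}(pr12 y) addrACA.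
exact: (pr1E (subD sI (pr1I x) (pr1I y)) (subD sJ (pr2J x) (pr2J y))).
Qed.
Lemma pr1Z a x : pr1 (a *: x) = a *: pr1 x.
Proof.
rewrite {1}(pr12 x) scalerDr.
exact: (pr1E (subZ sI a (pr1I x)) (subZ sJ a (pr2J x))).
Qed.
Lemma pr1N x : pr1 (- x) = - pr1 x.
Proof. by rewrite -scaleN1r pr1Z scaleN1r. Qed.
Lemma IJmul a b : I a -> J b -> a ** b = 0.
Proof. by move=> Ia /lan_ran Jb; apply: Jb. Qed.
Lemma JImul a b : I a -> J b -> b ** a = 0.
Proof. by move=> Ia Jb; apply: Jb. Qed.
Lemma mul_sum a b c d : I a -> J b -> I c -> J d -> (a + b) ** (c + d) = a ** c + b ** d.
Proof.
move=> Ia Jb Ic Jd; rewrite mulDl !mulDr (IJmul Ia Jd) (JImul Ic Jb).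
by rewrite addr0 add0r.
Qed.
Lemma mul_decomp x y : x ** y = pr1 x ** pr1 y + pr2 x ** pr2 y.
Proof.
rewrite {1}(pr12 x) {1}(pr12 y).
exact: (mul_sum (pr1I x) (pr2J x) (pr1I y) (pr2J y)).
Qed.
Lemma pr1M x y : pr1 (x ** y) = pr1 x ** pr1 y.
Proof. by rewrite mul_decomp (pr1E (Imr _ (pr1I x)) (Jmr _ (pr2J x))). Qed.
Lemma pr2M x y : pr2 (x ** y) = pr2 x ** pr2 y.
Proof. by rewrite mul_decomp (pr2E (Imr _ (pr1I x)) (Jmr _ (pr2J x))). Qed.
Lemma pr1S x : pr1 x^# = (pr1 x)^#.
Proof. by rewrite {1}(pr12 x) starD (pr1E (Istar (pr1I x)) (Jstar (pr2J x))). Qed.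
Lemma pr1_le i x : p i (pr1 x) <= p i x.
Proof. by rewrite {2}(pr12 x); apply: (est_IJ i (pr1I x) (pr2J x)). Qed.
Lemma pr2_le i x : p i (pr2 x) <= p i x.
Proof. by rewrite {2}(pr12 x); apply: (est_JI i (pr1I x) (pr2J x)). Qed.

Local Notation SA := (sub_lc HI).
Lemma valK (u v : lc_car SA) : sval u = sval v -> u = v.
Proof. by case: u v => x hx [y hy] /= e; apply: eq_exist. Qed.
Lemma sub_oppE (u : lc_car SA) : sval (lc_opp u) = - sval u.
Proof.
rewrite /= /sub_opp; case: pselect => // nh; exfalso; apply: nh.
exact: (subN sI (svalP u)).
Qed.
Lemma sub_starE (u : lc_car SA) : sval (lc_star u) = (sval u)^#.
Proof.
rewrite /= /sub_star; case: pselect => // nh; exfalso; apply: nh.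
exact: (Istar (svalP u)).
Qed.

Lemma sub_star_alg : is_star_algebra SA.
Proof.
case: hs => h1 [h2 [h3 [h4 [h5 [h6 [h7 [h8 [h9 [h10 [h11 [h12 [h13 [h14 [h15 [h16 h17]]]]]]]]]]]]]]].
repeat split.
all: move=> *; apply: valK; rewrite /= ?sub_oppE ?sub_starE /=.
all: first [exact: h1 | exact: h2 | exact: h3 | exact: h4 | exact: h5 | exact: h6
  | exact: h7 | exact: h8 | exact: h9 | exact: h10 | exact: h11 | exact: h12
  | exact: h13 | exact: h14 | exact: h15 | exact: h16 | exact: h17].
Qed.

Lemma sub_sn i : is_Cstar_seminorm (lc_sn SA i).
Proof.
case: (hp i) => q1 q2 q3 q4; split => *; rewrite /= ?sub_starE.
- exact: q1.
- exact: q2.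
- exact: q3.
- exact: q4.
Qed.

Lemma sub_haus : lc_hausdorff SA.
Proof. by move=> u h; apply: valK; apply: hH; exact: h. Qed.

Definition vl (u : lc_car SA) : T := sval u.
Lemma sub_complete : lc_complete SA.
Proof.
move=> F FF cF.
have GF : ProperFilter (vl @ F) by exact: fmap_proper_filter.
have [a0 ha0] : exists a0, forall i e, 0 < e -> (vl @ F) [set y | p i (y - a0) < e].
  apply: hC => i e e0; have [B [FB hB]] := cF i e e0.
  exists (vl @` B); split.
    change (F (vl @^-1` (vl @` B))); apply: filterS FB => u Bu; by exists u.
  move=> _ _ [u Bu <-] [v Bv <-]; have := hB u v Bu Bv.
  by rewrite /= sub_oppE.
have Ia0 : I a0.
  apply: (closedP cI) => Fs e e0.
  have hb : (vl @ F) [set y | forall i, In i Fs -> p i (y - a0) < e] by exact: filter_balls.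
  have /filter_ex [u hu] : F (vl @^-1` [set y | forall i, In i Fs -> p i (y - a0) < e]) := hb.
  by exists (vl u); split; [exact: svalP|exact: hu].
exists (exist _ a0 Ia0) => i e e0.
have h : F (vl @^-1` [set y | p i (y - a0) < e]) := ha0 i e e0.
by apply: filterS h => u /=; rewrite sub_oppE.
Qed.

Lemma Lirr (L : set (lc_car SA)) x (h h' : I x) : L (exist _ x h) -> L (exist _ x h').
Proof. by rewrite (Prop_irrelevance h h'). Qed.
Definition Lp (L : set (lc_car SA)) : set T := [set x | exists h : I x, L (exist _ x h)].

Lemma Lp_sub L : is_subspace L -> is_subspace (Lp L).
Proof.
case=> L0 LD LZ; apply: subspaceI.
- by exists (sub0 sI); move: L0 => /= L0; apply: Lirr L0.
- move=> x y [hx Lx] [hy Ly]; exists (subD sI hx hy).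
  by have := LD _ _ Lx Ly => /= h; apply: Lirr h.
- move=> a x [hx Lx]; exists (subZ sI a hx).
  by have := LZ a _ Lx => /= h; apply: Lirr h.
Qed.

Lemma Lp_closed L : lc_closed L -> lc_closed (sumset (Lp L) J).
Proof.
move=> cL; apply: closedI => x ax.
have L1 : Lp L (pr1 x).
  exists (pr1I x); apply: contrapT => nL.
  have [F [e [e0 sub]]] := cL (exist _ (pr1 x) (pr1I x)) nL.
  have [y [[l [b [[hl Ll] Jb ->]]] hy]] := ax F e e0.
  apply: (sub (exist _ l hl)) Ll => i iF /=; rewrite sub_oppE /=.
  apply: le_lt_trans (est_IJ i (subB sI hl (pr1I x)) (subB sJ Jb (pr2J x))) _.
  by rewrite addrACA -opprD -pr12; apply: hy.
by exists (pr1 x), (pr2 x); split => //; [exact: pr2J|exact: pr12].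
Qed.

Lemma Lp_elim L : sumset (Lp L) J = setT -> forall u, L u.
Proof.
move=> e [x hx]; have : sumset (Lp L) J x by rewrite e.
case=> l [b [[hl Ll] Jb ex]].
have b0 : b = 0.
  apply: IJ0 Jb; have -> : b = x - l by rewrite ex addrC addKr.
  exact: (subB sI hx hl).
by move: hx; rewrite ex b0 addr0 => hx; apply: Lirr Ll.
Qed.

Lemma sub_ann : annihilator SA.
Proof.
split.
- move=> L [sL mL cL]; split; last first.
    move=> ->; apply/seteqP; split => z /=.
      move=> hz; apply: valK => /=; apply: (IJ0 (svalP z)).
      apply/lan_ran => s Is; have := hz (exist _ s Is) Logic.I; move/(congr1 sval) => /= ->.
      by [].
    by move=> -> s _; apply: valK => /=; rewrite mulx0.
  move=> hran.
  have cK : closed_left_ideal (sumset (Lp L) J).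
    split; first exact: sumset_sub (Lp_sub sL) sJ.
      move=> c u [l [b [[hl Ll] Jb ->]]]; exists (pr1 c ** l), (c ** b); split.
      + exists (Iml (pr1 c) hl).
        by have := mL (exist _ (pr1 c) (pr1I c)) _ Ll => /= h; apply: Lirr h.
      + exact: Jml.
      + by rewrite mulDr {1}(pr12 c) mulDl (JImul hl (pr2J c)) addr0.
    exact: Lp_closed cL.
  have L0 : Lp L 0 by case: (Lp_sub sL).
  have ranK : ran (sumset (Lp L) J) = [set 0].
    apply/seteqP; split => z /=; last by move=> -> s _; rewrite mulx0.
    move=> hz.
    have z2 : pr2 z = 0.
      apply: semiprime => a.
      have Ja : J (pr2 z ** a) by apply: Jmr; apply: pr2J.
      rewrite {2}/pr2 mulBr (hz (pr2 z ** a)); last first.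
        by exists 0, (pr2 z ** a); split => //; rewrite add0r.
      by rewrite (JImul (pr1I z) Ja) subrr.
    have ez : z = pr1 z by rewrite {1}(pr12 z) z2 addr0.
    have : ran L (exist _ (pr1 z) (pr1I z)).
      move=> [s hs0] Ls; apply: valK => /=; rewrite -ez; apply: hz.
      by exists s, 0; split; [exists hs0|exact: sub0 sJ|rewrite addr0].
    by rewrite hran => /(congr1 sval) /= h; rewrite ez h.
  apply/seteqP; split => u // _; exact: Lp_elim ((hann.1 _ cK).1 ranK) u.
- move=> L [sL mL cL]; split; last first.
    move=> ->; apply/seteqP; split => z /=.
      move=> hz; apply: valK => /=; apply: (IJ0 (svalP z)).
      move=> s Is; have := hz (exist _ s Is) Logic.I; move/(congr1 sval) => /= ->.
      by [].
    by move=> -> s _; apply: valK => /=; rewrite mul0x.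
  move=> hlan.
  have cK : closed_right_ideal (sumset (Lp L) J).
    split; first exact: sumset_sub (Lp_sub sL) sJ.
      move=> c u [l [b [[hl Ll] Jb ->]]]; exists (l ** pr1 c), (b ** c); split.
      + exists (Imr (pr1 c) hl).
        by have := mL (exist _ (pr1 c) (pr1I c)) _ Ll => /= h; apply: Lirr h.
      + exact: Jmr.
      + by rewrite mulDl {1}(pr12 c) mulDr (IJmul hl (pr2J c)) addr0.
    exact: Lp_closed cL.
  have L0 : Lp L 0 by case: (Lp_sub sL).
  have lanK : lan (sumset (Lp L) J) = [set 0].
    apply/seteqP; split => z /=; last by move=> -> s _; rewrite mul0x.
    move=> hz.
    have z2 : pr2 z = 0.
      apply: semiprime => a; rewrite -mulA.
      have Ja : J (a ** pr2 z) by apply: Jml; apply: pr2J.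
      rewrite {1}/pr2 mulBl (hz (a ** pr2 z)); last first.
        by exists 0, (a ** pr2 z); split => //; rewrite add0r.
      by rewrite (IJmul (pr1I z) Ja) subrr.
    have ez : z = pr1 z by rewrite {1}(pr12 z) z2 addr0.
    have : lan L (exist _ (pr1 z) (pr1I z)).
      move=> [s hs0] Ls; apply: valK => /=; rewrite -ez; apply: hz.
      by exists s, 0; split; [exists hs0|exact: sub0 sJ|rewrite addr0].
    by rewrite hlan => /(congr1 sval) /= h; rewrite ez h.
  apply/seteqP; split => u // _; exact: Lp_elim ((hann.2 _ cK).1 lanK) u.
Qed.

Lemma sub_ok : annihilator_locally_Cstar SA.
Proof.
split; last exact: sub_ann.
split; [exact: sub_star_alg|exact: sub_sn|exact: sub_haus|exact: sub_complete].
Qed.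
End Ideal.

Section Main.
Variable I : set T.
Hypothesis HI : closed_ideal I.
Local Notation J := (lan I).
Local Notation Q := (quot_lc I).
Local Notation In := Stdlib.Lists.List.In.

Lemma HJ : closed_ideal J.
Proof. split; [exact: sJ I|exact: Jml HI|exact: Jmr HI|exact: cJ I]. Qed.

Lemma coset_eq x y : I (x - y) -> coset I x = coset I y.
Proof.
move=> h; apply/seteqP; split => w /= hw.
  change (I (w - y)).
  have -> : w - y = (w - x) + (x - y) by rewrite addrA subrK.
  exact: (subD (sI HI) hw h).
change (I (w - x)).
have -> : w - x = (w - y) - (x - y) by rewrite opprB addrA subrK.
exact: (subB (sI HI) hw h).
Qed.
Lemma qclass_eq x y : I (x - y) -> qclass I x = qclass I y.
Proof. by move=> h; apply: eq_exist; apply: coset_eq. Qed.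
Lemma qclass_inj x y : qclass I x = qclass I y -> I (x - y).
Proof.
move/(congr1 sval) => /= e.
have : coset I x x by change (I (x - x)); rewrite subrr; exact: (sub0 (sI HI)).
by rewrite e.
Qed.
Lemma qrep_spec (C : quot_car I) : sval C = coset I (qrep C).
Proof. by rewrite /qrep; case: (cid (svalP C)) => x hx /=. Qed.
Lemma qrepK (C : quot_car I) : qclass I (qrep C) = C.
Proof.
case: C => S pf; rewrite /qclass; apply: eq_exist.
exact: (esym (qrep_spec (exist _ S pf))).
Qed.
Lemma qrep_cl x : I (qrep (qclass I x) - x).
Proof. by apply: qclass_inj; rewrite qrepK. Qed.

Lemma q_add C D : @lc_add _ Q C D = qclass I (qrep C + qrep D). Proof. by []. Qed.
Lemma q_opp C : @lc_opp _ Q C = qclass I (- qrep C). Proof. by []. Qed.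
Lemma q_scale a C : @lc_scale _ Q a C = qclass I (a *: qrep C). Proof. by []. Qed.
Lemma q_mul C D : @lc_mul _ Q C D = qclass I (qrep C ** qrep D). Proof. by []. Qed.
Lemma q_star C : @lc_star _ Q C = qclass I (qrep C)^#. Proof. by []. Qed.
Lemma q_zero : lc_zero Q = qclass I 0. Proof. by []. Qed.

Lemma qadd x y : @lc_add _ Q (qclass I x) (qclass I y) = qclass I (x + y).
Proof.
rewrite q_add; apply: qclass_eq; rewrite opprD addrACA.
exact: (subD (sI HI) (qrep_cl x) (qrep_cl y)).
Qed.
Lemma qopp x : @lc_opp _ Q (qclass I x) = qclass I (- x).
Proof.
rewrite q_opp; apply: qclass_eq; rewrite -opprD.
exact: (subN (sI HI) (qrep_cl x)).
Qed.
Lemma qscale a x : @lc_scale _ Q a (qclass I x) = qclass I (a *: x).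
Proof.
rewrite q_scale; apply: qclass_eq; rewrite -scalerBr.
exact: (subZ (sI HI) a (qrep_cl x)).
Qed.
Lemma qmul x y : @lc_mul _ Q (qclass I x) (qclass I y) = qclass I (x ** y).
Proof.
rewrite q_mul; apply: qclass_eq.
set qx := qrep (qclass I x); set qy := qrep (qclass I y).
have -> : qx ** qy - x ** y = (qx - x) ** qy + x ** (qy - y).
  by rewrite mulBl mulBr addrA subrK.
apply: (subD (sI HI)); [exact: Imr (qrep_cl x)|exact: Iml (qrep_cl y)].
Qed.
Lemma qstar x : @lc_star _ Q (qclass I x) = qclass I x^#.
Proof.
rewrite q_star; apply: qclass_eq; rewrite -starB.
exact: Istar (qrep_cl x).
Qed.

Lemma pr2_congr x y : I (y - x) -> pr2 HI y = pr2 HI x.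
Proof.
move=> h.
have e : pr1 HI y = pr1 HI x + (y - x).
  by rewrite -(pr1_I HI h) -pr1D addrC subrK.
by rewrite /pr2 e [pr1 HI x + _]addrC opprD addrA opprB [y + _]addrC subrK.
Qed.
Lemma pr2_J b : J b -> pr2 HI b = b.
Proof. by move=> Jb; rewrite /pr2 (pr1_J HI Jb) subr0. Qed.
Lemma pr2B x y : pr2 HI (x - y) = pr2 HI x - pr2 HI y.
Proof. by rewrite /pr2 pr1D pr1N !opprD !opprK [LHS]addrACA. Qed.

Lemma qnorm i x : lc_sn Q i (qclass I x) = p i (pr2 HI x).
Proof.
rewrite /=.
set E := [set p i y | y in coset I x].
have lb : lbound E (p i (pr2 HI x)).
  move=> _ [y hy <-]; rewrite -(pr2_congr hy); exact: pr2_le.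
have mem : E (p i (pr2 HI x)).
  exists (pr2 HI x) => //; change (I (pr2 HI x - x)); rewrite /pr2 addrC addKr.
  exact: (subN (sI HI) (pr1I HI x)).
apply/eqP; rewrite eq_le; apply/andP; split.
  by apply: ge_inf => //; exists (p i (pr2 HI x)).
by apply: lb_le_inf => //; exists (p i (pr2 HI x)).
Qed.

Lemma qnorm' i C : lc_sn Q i C = p i (pr2 HI (qrep C)).
Proof. by rewrite -{1}(qrepK C) qnorm. Qed.

(* the quotient is isomorphic to J *)
Definition qphi (b : lc_car (sub_lc HJ)) : lc_car Q := qclass I (sval b).
Definition qpsi (C : lc_car Q) : lc_car (sub_lc HJ) :=
  exist _ (pr2 HI (qrep C)) (pr2J HI (qrep C)).

Lemma quot_ok : annihilator_locally_Cstar Q.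
Proof.
apply: (@tr_ok _ (sub_lc HJ) Q qphi qpsi id id).
- move=> C; rewrite /qphi /qpsi /= -[RHS]qrepK; apply: qclass_eq.
  rewrite /pr2 addrC addKr; exact: (subN (sI HI) (pr1I HI _)).
- move=> b; apply: valK => /=; rewrite (pr2_congr (qrep_cl (sval b))).
  exact: pr2_J (svalP b).
- by [].
- by move=> x y; rewrite /qphi qadd.
- by move=> x; rewrite /qphi qopp sub_oppE.
- by move=> a x; rewrite /qphi qscale.
- by move=> x y; rewrite /qphi qmul.
- by move=> x; rewrite /qphi qstar sub_starE.
- by move=> i b; rewrite /qphi qnorm /= pr2_J //; exact: svalP b.
- by move=> i b; rewrite /qphi qnorm /= pr2_J //; exact: svalP b.
- exact: sub_ok HJ.
Qed.

Definition fiso (x : T) : lc_car (prod_lc (sub_lc HI) Q) :=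
  (exist _ (pr1 HI x) (pr1I HI x), qclass I x).
Definition giso (w : lc_car (prod_lc (sub_lc HI) Q)) : T :=
  sval w.1 + pr2 HI (qrep w.2).

Lemma fiso_ok : top_star_iso fiso.
Proof.
split.
  exists giso; split.
  - move=> x; rewrite /giso /fiso /=.
    by rewrite (pr2_congr (qrep_cl x)) -pr12.
  - move=> [u C]; rewrite /giso /fiso /=; apply: pair_eq.
      by apply: valK => /=; exact: (pr1E HI (svalP u) (pr2J HI _)).
    rewrite -[RHS]qrepK; apply: qclass_eq.
    have -> : sval u + pr2 HI (qrep C) - qrep C = sval u - pr1 HI (qrep C).
      by rewrite /pr2 addrA addrAC addrK.
    exact: (subB (sI HI) (svalP u) (pr1I HI _)).
  - apply: cont_by => i; exists [:: inl i; inr i] => -[ux Cx] [uy Cy] e e0 hj.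
    have h1 := hj (inl i) (or_introl erefl).
    have h2 := hj (inr i) (or_intror (or_introl erefl)).
    have h1' : p i (sval uy - sval ux) < e by move: h1 => /=; rewrite sub_oppE.
    have h2' : lc_sn Q i (@lc_add _ Q Cy (@lc_opp _ Q Cx)) < e := h2.
    rewrite -(qrepK Cx) -(qrepK Cy) qopp qadd qnorm pr2B in h2'.
    suff G : p i (giso (uy, Cy) - giso (ux, Cx)) < e + e by [].
    rewrite /giso /= opprD addrACA.
    apply: le_lt_trans (pD _ _ _) _; lra.
split.
- apply: cont_by => -[] i; exists [:: i] => x y e e0 hj; have h : p i (y - x) < e := hj i (or_introl erefl).
    suff G : lc_sn (sub_lc HI) i (lc_add (fiso y).1 (lc_opp (fiso x).1)) < e + e by [].
    have -> : lc_sn (sub_lc HI) i (lc_add (fiso y).1 (lc_opp (fiso x).1)) = p i (pr1 HI y - pr1 HI x).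
      by rewrite /= sub_oppE.
    rewrite -pr1N -pr1D.
    apply: le_lt_trans (pr1_le HI i _) _; lra.
  suff G : lc_sn Q i (@lc_add _ Q (qclass I y) (@lc_opp _ Q (qclass I x))) < e + e by [].
  rewrite qopp qadd qnorm.
  apply: le_lt_trans (pr2_le HI i _) _; lra.
- move=> x y; apply: pair_eq; last exact: (esym (qadd x y)).
  by apply: valK => /=; exact: (pr1D HI x y).
- move=> a x; apply: pair_eq; last exact: (esym (qscale a x)).
  by apply: valK => /=; exact: (pr1Z HI a x).
- move=> x y; apply: pair_eq; last exact: (esym (qmul x y)).
  by apply: valK => /=; exact: (pr1M HI x y).
- move=> x; apply: pair_eq; last exact: (esym (qstar x)).
  by apply: valK; rewrite sub_starE /=; exact: (pr1S HI x).
Qed.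
End Main.
End S.

Unset Implicit Arguments.
Theorem proposition3p26 (R : realType) (A : lcdata R) (I : set (lc_car A))
  (hA : annihilator_locally_Cstar A) (HI : closed_ideal I) :
  annihilator_locally_Cstar (sub_lc HI) /\
  annihilator_locally_Cstar (quot_lc I) /\
  exists f : lc_car A -> lc_car (prod_lc (sub_lc HI) (quot_lc I)), top_star_iso f.
Proof.
case: hA => [[hs hp hH hC] hann].
split; first exact: (sub_ok hs hp hH hC hann HI).
split; first exact: (quot_ok hs hp hH hC hann HI).
eexists; exact: (fiso_ok hs hp hH hC hann HI).
Qed.
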